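(* Let $n\ge 3$, $0<m<\frac{n-2}{n}$, $\eta_0>0$, $\rho_1>0$, let $\beta$ satisfy $-\frac{\rho_1}{2}<\beta<\frac{m\rho_1}{n-2-nm}$, and let $\alpha=\frac{2\beta+\rho_1}{1-m}$. Let $r_0>0$ and let $f\in C^1([0,r_0);\mathbb{R})\cap C^2((0,r_0);\mathbb{R})$ be a radially symmetric solution in $B_{r_0}$ of $$(f^m/m)_{rr}+\frac{n-1}{r}(f^m/m)_r+\alpha f+\beta r f_r=0,\quad f>0,\quad 0<r<r_0,$$ with $f(0)=\eta_0$, $f_r(0)=0$. Then $f_r(r)<0$ for all $0<r<r_0$.
   Context: $B_R=\{x\in\mathbb{R}^n:|x|<R\}$; $r=|x|$ and $f_r$ is the radial derivative. *)

(* Defs.v *)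
From Stdlib Require Import Reals.
From Coquelicot Require Import Coquelicot.
Open Scope R_scope.

Definition fm_over_m (m : R) (f : R -> R) (r : R) : R := Rpower (f r) m / m.

(* Main.v *)
Require Import Defs.
From Stdlib Require Import Reals Lra Lia.
From Coquelicot Require Import Coquelicot.
Open Scope R_scope.
Lemma loc_R (x:R) (P:R->Prop): locally x P -> exists d, 0<d /\ forall y, Rabs(y-x)<d -> P y.
Proof. intros [e He]. exists e. split. apply cond_pos. intros y Hy. apply He. exact Hy. Qed.

Lemma der_mult f g x df dg: is_derive f x df -> is_derive g x dg ->
  is_derive (fun t => f t * g t) x (df * g x + f x * dg).
Proof. intros H1 H2. exact (is_derive_mult f g x df dg H1 H2 Rmult_comm). Qed.

Lemma der_comp f g x df dg: is_derive f (g x) df -> is_derive g x dg ->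
  is_derive (fun t => f (g t)) x (dg * df).
Proof. intros H1 H2. exact (is_derive_comp f g x df dg H1 H2). Qed.

Lemma der_rpow x y : 0 < x -> is_derive (fun t => Rpower t y) x (y * Rpower x (y - 1)).
Proof. intros. apply is_derive_Reals. now apply derivable_pt_lim_power. Qed.

Lemma right_lim (g : R -> R) l : filterlim g (at_right 0) (locally l) ->
  forall eps, 0 < eps -> exists d, 0 < d /\ forall a, 0 < a < d -> Rabs (g a - l) < eps.
Proof.
  intros H eps He. destruct (proj1 (filterlim_locally g l) H (mkposreal eps He)) as [d Hd].
  exists d. split. apply cond_pos. intros a Ha. apply (Hd a).
  change (Rabs (a - 0) < d). rewrite Rminus_0_r, Rabs_pos_eq; lra. lra.
Qed.

Lemma cont_R (g : R -> R) r : continuous g r ->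
  forall eps, 0 < eps -> exists d, 0 < d /\ forall t, Rabs (t - r) < d -> Rabs (g t - g r) < eps.
Proof.
  intros H eps He. destruct (proj1 (filterlim_locally g (g r)) H (mkposreal eps He)) as [d Hd].
  exists d. split. apply cond_pos. intros t Ht. apply (Hd t). exact Ht.
Qed.

Lemma pow_le1 a k : 0 <= a <= 1 -> a ^ k <= 1.
Proof. intros H. induction k; simpl. lra. 
  assert (0 <= a ^ k) by (apply pow_le; lra). nra. Qed.

Lemma rpow_neg_anti x y c : 0 < y <= x -> c <= 0 -> Rpower x c <= Rpower y c.
Proof. intros H Hc. set (d := - c). replace c with (- d) by (unfold d; ring).
  rewrite !Rpower_Ropp.
  apply Rinv_le_contravar. unfold Rpower; apply exp_pos.
  apply Rle_Rpower_l; unfold d; lra. Qed.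

Theorem lemma2p2
  (n : nat) (m eta0 rho1 beta r0 : R) (f f' : R -> R)
  (Hn : (3 <= n)%nat)
  (Hm0 : 0 < m) (Hm1 : m < (INR n - 2) / INR n)
  (Heta0 : 0 < eta0) (Hrho1 : 0 < rho1)
  (Hbeta1 : - rho1 / 2 < beta)
  (Hbeta2 : beta < m * rho1 / (INR n - 2 - INR n * m))
  (Hr0 : 0 < r0)
  (Hder : forall r, 0 < r < r0 -> is_derive f r (f' r))
  (Hder0 : filterlim (fun h => (f h - f 0) / h) (at_right 0) (locally (f' 0)))
  (Hcont' : forall r, 0 < r < r0 -> continuous f' r)
  (Hcont'0 : filterlim f' (at_right 0) (locally (f' 0)))
  (HC2 : forall r, 0 < r < r0 -> ex_derive f' r /\ continuous (Derive f') r)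
  (Hpos : forall r, 0 < r < r0 -> 0 < f r)
  (Hode : forall r, 0 < r < r0 ->
     Derive (Derive (fm_over_m m f)) r
     + (INR n - 1) / r * Derive (fm_over_m m f) r
     + (2 * beta + rho1) / (1 - m) * f r + beta * r * f' r = 0)
  (Hf0 : f 0 = eta0) (Hf'0 : f' 0 = 0) :
  forall r, 0 < r < r0 -> f' r < 0.
Proof.
intros r Hr.
assert (Hn3: 3 <= INR n) by (replace 3 with (INR 3) by (simpl; ring); apply le_INR; exact Hn).
assert (Hlt1 : (INR n - 2)/INR n < 1).
{ apply Rmult_lt_reg_r with (INR n); [lra|]. unfold Rdiv; rewrite Rmult_assoc, Rinv_l; lra. }
assert (Hm1' : m < 1) by lra.
set (al := (2*beta+rho1)/(1-m)) in *.
assert (Hal: 0 < al) by (unfold al; apply Rdiv_lt_0_compat; lra).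
set (P := fun a => Rpower (f a) (m-1)).
set (G1 := fun a => P a * f' a).
assert (HP : forall a, 0 < P a) by (intro a; unfold P, Rpower; apply exp_pos).
assert (F1 : forall a, 0 < a < r0 -> is_derive (fm_over_m m f) a (G1 a)).
{ intros a Ha. unfold fm_over_m.
  assert (H1 := der_comp (fun t => Rpower t m) f a _ _ (der_rpow (f a) m (Hpos a Ha)) (Hder a Ha)).
  assert (H2 := der_mult _ (fun _ => /m) a _ 0 H1 (is_derive_const (/m) a)).
  replace (G1 a) with (f' a * (m * Rpower (f a) (m - 1)) * / m + Rpower (f a) m * 0)
    by (unfold G1, P; field; lra).
  exact H2. }
assert (F2 : forall a, 0 < a < r0 -> ex_derive G1 a).
{ intros a Ha. destruct (HC2 a Ha) as [[d' Hd'] _]. eexists. unfold G1, P.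
  apply (der_mult (fun t => Rpower (f t) (m-1)) f' a _ _ (der_comp (fun t => Rpower t (m-1)) f a _ _ (der_rpow (f a) (m-1) (Hpos a Ha)) (Hder a Ha)) Hd'). }
assert (ODE2 : forall a, 0 < a < r0 ->
   Derive G1 a = - ((INR n - 1) / a * G1 a) - al * f a - beta * a * f' a).
{ intros a Ha.
  assert (E : Derive (Derive (fm_over_m m f)) a = Derive G1 a).
  { apply Derive_ext_loc.
    assert (Hp : 0 < Rmin a (r0 - a)) by (apply Rmin_pos; lra).
    exists (mkposreal _ Hp). intros t Ht. change (Rabs (t - a) < Rmin a (r0 - a)) in Ht.
    apply Rabs_lt_between' in Ht. pose proof (Rmin_l a (r0 - a)). pose proof (Rmin_r a (r0-a)).
    apply is_derive_unique, F1. lra. }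
  pose proof (Hode a Ha) as Ho. rewrite E, (is_derive_unique _ _ _ (F1 a Ha)) in Ho. lra. }
destruct (right_lim f' _ Hcont'0 1 Rlt_0_1) as [d1 [Hd1pos Hd1]].
destruct (right_lim _ _ Hder0 1 Rlt_0_1) as [d2 [Hd2pos Hd2]].
set (cc := al*eta0/(2*(Rabs beta+1))).
assert (Hcc : 0 < cc) by (unfold cc; apply Rdiv_lt_0_compat; pose proof (Rabs_pos beta); nra).
set (del := Rmin d1 (Rmin d2 (Rmin (eta0/2) (Rmin r0 (Rmin 1 cc))))).
assert (Hdel : 0 < del /\ del <= d1 /\ del <= d2 /\ del <= eta0/2 /\ del <= r0 /\ del <= 1
   /\ del <= cc).
{ unfold del. split; [repeat (apply Rmin_pos; [lra|]); lra|].
  split; [apply Rmin_l|].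
  split; [eapply Rle_trans; [apply Rmin_r|]; apply Rmin_l|].
  split; [eapply Rle_trans; [apply Rmin_r|]; eapply Rle_trans; [apply Rmin_r|]; apply Rmin_l|].
  split; [eapply Rle_trans; [apply Rmin_r|]; eapply Rle_trans; [apply Rmin_r|];
          eapply Rle_trans; [apply Rmin_r|]; apply Rmin_l|].
  split; [eapply Rle_trans; [apply Rmin_r|]; eapply Rle_trans; [apply Rmin_r|];
          eapply Rle_trans; [apply Rmin_r|]; eapply Rle_trans; [apply Rmin_r|]; apply Rmin_l|].
  eapply Rle_trans; [apply Rmin_r|]; eapply Rle_trans; [apply Rmin_r|];
  eapply Rle_trans; [apply Rmin_r|]; eapply Rle_trans; [apply Rmin_r|]; apply Rmin_r. }
destruct Hdel as (Hdp & Hdd1 & Hdd2 & Hde & Hdr0 & Hd1' & Hdb).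
assert (Bnd : forall a, 0 < a < del -> eta0/2 < f a /\ Rabs (f' a) < 1 /\ 0 < al * f a + beta * a * f' a).
{ intros a Ha.
  assert (A1 : Rabs (f' a) < 1) by (specialize (Hd1 a ltac:(lra)); rewrite Hf'0, Rminus_0_r in Hd1; exact Hd1).
  assert (A2 : eta0/2 < f a).
  { specialize (Hd2 a ltac:(lra)). apply Rabs_lt_between' in Hd2. rewrite Hf'0 in Hd2.
    assert (f a - eta0 = ((f a - f 0)/a) * a) by (rewrite Hf0; field; lra). nra. }
  split; [exact A2|split; [exact A1|]].
  pose proof (Rabs_pos beta). pose proof (Rabs_pos (f' a)).
  assert (Rabs (beta * a * f' a) <= Rabs beta * a).
  { rewrite !Rabs_mult, (Rabs_pos_eq a) by lra.
    assert (0 <= Rabs beta * a) by nra. nra. }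
  pose proof (Rabs_maj2 (beta * a * f' a)).
  assert (X: cc * (2*(Rabs beta+1)) = al*eta0) by (unfold cc; field; lra).
  nra. }
set (h := fun a => a^(n-1) * G1 a).
assert (Hh : forall a, 0 < a < r0 -> is_derive h a (- a^(n-1) * (al * f a + beta * a * f' a))).
{ intros a Ha.
  assert (H3 := der_mult _ _ a _ _ (is_derive_pow (fun t => t) (n-1) a 1 (is_derive_id a))
                  (Derive_correct _ _ (F2 a Ha))).
  assert (E1: INR (n-1) = INR n - 1) by (rewrite minus_INR by lia; simpl; ring).
  assert (E2: a^(n-1) = a * a^(Nat.pred (n-1))).
  { replace (n-1)%nat with (S (Nat.pred (n-1))) at 1 by lia. simpl. ring. }
  rewrite ODE2, E1 in H3 by exact Ha.
  unfold h. replace (- a^(n-1) * (al * f a + beta * a * f' a)) with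
    ((INR n - 1) * 1 * a ^ Init.Nat.pred (n - 1) * G1 a +
      a ^ (n - 1) * (- ((INR n - 1) / a * G1 a) - al * f a - beta * a * f' a)).
  exact H3. rewrite E2. field. lra. }
assert (Hdec : forall a b, 0 < a < b -> b < del -> h b < h a).
{ intros a b Hab Hbd.
  destruct (MVT_gen h a b (fun x => - x^(n-1) * (al * f x + beta * x * f' x))) as [c [Hc Heq]].
  - intros x Hx. rewrite Rmin_left, Rmax_right in Hx by lra. apply Hh. lra.
  - intros x Hx. rewrite Rmin_left, Rmax_right in Hx by lra.
    apply derivable_continuous_pt. eexists. apply (proj1 (is_derive_Reals _ _ _)), Hh. lra.
  - rewrite Rmin_left, Rmax_right in Hc by lra.
    assert (0 < c^(n-1)) by (apply pow_lt; lra).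
    assert (0 < al * f c + beta * c * f' c) by (apply Bnd; lra).
    assert (0 < c^(n-1) * (al * f c + beta * c * f' c) * (b - a)).
    { apply Rmult_lt_0_compat; [apply Rmult_lt_0_compat|]; lra. }
    lra. }
set (K := Rpower (eta0/2) (m-1)).
assert (HK : 0 < K) by (unfold K, Rpower; apply exp_pos).
assert (Hhb : forall a, 0 < a < del -> h a <= a * K).
{ intros a Ha. destruct (Bnd a Ha) as (B1 & B2 & _).
  assert (PK : P a <= K) by (unfold P, K; apply rpow_neg_anti; lra).
  assert (E2: a^(n-1) = a * a^(Nat.pred (n-1))).
  { replace (n-1)%nat with (S (Nat.pred (n-1))) at 1 by lia. simpl. ring. }
  assert (Q1 : a^(Nat.pred (n-1)) <= 1) by (apply pow_le1; lra).
  assert (Q0 : 0 <= a^(Nat.pred (n-1))) by (apply pow_le; lra).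
  pose proof (Rle_abs (f' a)). pose proof (HP a).
  unfold h, G1. rewrite E2.
  assert (0 <= a * a ^ Init.Nat.pred (n - 1)) by (apply Rmult_le_pos; lra).
  destruct (Rle_or_lt (f' a) 0) as [Hf|Hf].
  - assert (0 <= a * a ^ Init.Nat.pred (n - 1) * P a) by (apply Rmult_le_pos; lra).
    assert (a * a ^ Init.Nat.pred (n - 1) * P a * f' a <= 0) by nra.
    assert (0 <= a * K) by nra. nra.
  - assert (P a * f' a <= K * 1) by (apply Rmult_le_compat; lra).
    assert (a * a ^ Init.Nat.pred (n - 1) <= a * 1) by (apply Rmult_le_compat_l; lra).
    apply Rle_trans with (a * 1 * (K * 1)); [|lra].
    apply Rmult_le_compat; try lra. apply Rmult_le_pos; lra. }
assert (Hneg : forall b, 0 < b < del -> h b < 0).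
{ intros b Hb.
  assert (Hnp : forall c, 0 < c < del -> h c <= 0).
  { intros c Hc. destruct (Rle_or_lt (h c) 0) as [H|H]; auto. exfalso.
    set (a := Rmin (c/2) (h c / (2*(K+1)))).
    assert (Ha1 : a <= c/2) by apply Rmin_l.
    assert (Ha2 : a <= h c / (2*(K+1))) by apply Rmin_r.
    assert (Ha0 : 0 < a) by (apply Rmin_pos; [lra| apply Rdiv_lt_0_compat; lra]).
    assert (h c < h a) by (apply Hdec; lra).
    assert (h a <= a * K) by (apply Hhb; lra).
    assert (X : h c / (2*(K+1)) * (2*(K+1)) = h c) by (field; lra).
    nra. }
  apply Rlt_le_trans with (h (b/2)). apply Hdec; lra. apply Hnp; lra. }
assert (Hnear : forall b, 0 < b < del -> f' b < 0).
{ intros b Hb. destruct (Rlt_or_le (f' b) 0) as [H|H]; auto. exfalso.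
  pose proof (Hneg b Hb). pose proof (HP b).
  assert (0 < b^(n-1)) by (apply pow_lt; lra).
  assert (0 <= b^(n-1) * (P b * f' b)) by (apply Rmult_le_pos; [lra|apply Rmult_le_pos; lra]).
  unfold h, G1 in *. lra. }
destruct (Rlt_or_le (f' r) 0) as [ok|Hge]; [exact ok|exfalso].
assert (Hrd : del <= r).
{ destruct (Rlt_or_le r del) as [H|H]; auto. pose proof (Hnear r ltac:(lra)). lra. }
set (E := fun s => 0 < s <= r /\ forall t, 0 < t <= s -> f' t < 0).
assert (HE : E (del/2)). { split. lra. intros t Ht. apply Hnear; lra. }
assert (Hb : bound E). { exists r. intros s [Hs _]. lra. }
destruct (completeness E Hb (ex_intro _ _ HE)) as [r1 [Hub Hlub]].
assert (Hr1a : del/2 <= r1) by (apply Hub; exact HE).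
assert (Hr1b : r1 <= r). { apply Hlub. intros s [Hs _]. lra. }
assert (Hi : forall t, 0 < t < r1 -> f' t < 0).
{ intros t Ht. destruct (Rlt_or_le (f' t) 0) as [H|H]; auto. exfalso.
  assert (r1 <= t). { apply Hlub. intros s [Hs Hs2]. destruct (Rle_or_lt s t) as [H1|H1]; auto.
    exfalso. specialize (Hs2 t ltac:(lra)). lra. }
  lra. }
assert (Hz : f' r1 = 0).
{ destruct (Rtotal_order (f' r1) 0) as [Hlt|[Heq|Hgt]]; auto; exfalso.
  - destruct (cont_R f' r1 (Hcont' r1 ltac:(lra)) (- f' r1) ltac:(lra)) as [d [Hd Hd']].
    destruct (Req_dec r1 r) as [Hq|Hq]. { subst r1. lra. }
    set (s := Rmin r (r1 + d/2)).
    assert (Hs1 : s <= r) by apply Rmin_l. assert (Hs2 : s <= r1 + d/2) by apply Rmin_r.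
    assert (Hs3 : r1 < s) by (apply Rmin_glb_lt; lra).
    assert (E s).
    { split. lra. intros t Ht. destruct (Rtotal_order t r1) as [H1|[H1|H1]].
      - apply Hi; lra.
      - subst t. lra.
      - assert (Rabs (t - r1) < d) by (apply Rabs_lt_between'; lra).
        specialize (Hd' t H). apply Rabs_lt_between' in Hd'. lra. }
    pose proof (Hub s H). lra.
  - destruct (cont_R f' r1 (Hcont' r1 ltac:(lra)) (f' r1) ltac:(lra)) as [d [Hd Hd']].
    set (t := Rmax (r1/2) (r1 - d/2)).
    assert (Ht1 : r1/2 <= t) by apply Rmax_l. assert (Ht2 : r1 - d/2 <= t) by apply Rmax_r.
    assert (Ht3 : t < r1) by (apply Rmax_lub_lt; lra).
    assert (Rabs (t - r1) < d) by (apply Rabs_lt_between'; lra).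
    specialize (Hd' t H). apply Rabs_lt_between' in Hd'.
    pose proof (Hi t ltac:(lra)). lra. }
assert (HG0 : G1 r1 = 0) by (unfold G1; rewrite Hz; ring).
assert (HD : Derive G1 r1 = - al * f r1).
{ rewrite ODE2 by lra. rewrite HG0, Hz. field. lra. }
assert (HDn : Derive G1 r1 < 0). { rewrite HD. pose proof (Hpos r1 ltac:(lra)). nra. }
pose proof (proj1 (is_derive_Reals _ _ _) (Derive_correct _ _ (F2 r1 ltac:(lra)))) as HL.
destruct (HL (- Derive G1 r1 / 2) ltac:(lra)) as [dl Hdl].
set (hh := - Rmin dl r1 / 2).
assert (Hm0' : 0 < Rmin dl r1) by (apply Rmin_pos; [apply cond_pos|lra]).
assert (Hhh1 : Rmin dl r1 <= dl) by apply Rmin_l. assert (Hhh2 : Rmin dl r1 <= r1) by apply Rmin_r.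
assert (Hhh : hh < 0) by (unfold hh; lra).
assert (Habs : Rabs hh < dl) by (rewrite Rabs_left by lra; unfold hh; lra).
specialize (Hdl hh ltac:(lra) Habs). apply Rabs_lt_between in Hdl.
assert (HGx : G1 (r1 + hh) < 0).
{ pose proof (Hi (r1 + hh) ltac:(unfold hh; lra)). pose proof (HP (r1+hh)). unfold G1. nra. }
assert (/ hh < 0) by (apply Rinv_lt_0_compat; lra).
rewrite HG0 in Hdl. unfold Rdiv in Hdl.
assert (0 < (G1 (r1 + hh) - 0) * / hh) by nra.
lra.
Qed.
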